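(* Let $R$ be an integral domain, $q\in R^\times$, and let $(u_1,\ldots,u_r)$ and $(\tilde u_1,\ldots,\tilde u_r)$ be $r$-tuples in $R$ with $\Delta=\prod_{i>j}(u_i-u_j)\in R^\times$ and $\tilde\Delta=\prod_{i>j}(\tilde u_i-\tilde u_j)\in R^\times$. Then there is an $R$-algebra isomorphism $\mathcal H_{n,r}(R,q,\tilde u_1,\ldots,\tilde u_r)\to\mathcal H_{n,r}(R,q,u_1,\ldots,u_r)$ with $\tilde T_j\mapsto T_j$ ($1\le j\le n-1$) and $$\tilde t_i\mapsto\sum_{\mathbf k\in[1,r]^n}\tilde u_{k_i}b_{\mathbf k}=\sum_{j=0}^{r-1}a_jt_i^j\quad(1\le i\le n),$$ where $\tilde T_j,\tilde t_i$ are the defining generators of $\mathcal H_{n,r}(R,q,\tilde u_1,\ldots,\tilde u_r)$, $b_{\mathbf k}$ is formed in $\mathcal H_{n,r}(R,q,u_1,\ldots,u_r)$, and $a_0,\ldots,a_{r-1}\in R$ are determined by $\sum_{j=0}^{r-1}a_ju_m^j=\tilde u_m$ for $m=1,\ldots,r$.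
   Context: For an integral domain $R$, $q\in R^\times$ and $u_1,\ldots,u_r\in R$ with $\Delta:=\prod_{1\le j<i\le r}(u_i-u_j)\in R^\times$: for $1\le c\le r$ let $F_c(X)\in R[X]$ be the unique polynomial of degree $\le r-1$ with $F_c(u_{c'})=\delta_{c,c'}\Delta$. The modified Ariki–Koike (Shoji) algebra $\mathcal H_{n,r}(R,q,u_1,\ldots,u_r)$ is the associative $R$-algebra generated by $t_1,\ldots,t_n,T_1,\ldots,T_{n-1}$ subject to: $(T_i-q)(T_i+q^{-1})=0$; $(t_i-u_1)\cdots(t_i-u_r)=0$; $T_iT_{i+1}T_i=T_{i+1}T_iT_{i+1}$; $T_iT_j=T_jT_i$ for $|i-j|\ge2$; $t_it_j=t_jt_i$; $T_jt_k=t_kT_j$ for $k\ne j,j+1$; and for $2\le j\le n$: $T_{j-1}t_j=t_{j-1}T_{j-1}+\Delta^{-2}\sum_{1\le c_1<c_2\le r}(u_{c_2}-u_{c_1})(q-q^{-1})F_{c_1}(t_{j-1})F_{c_2}(t_j)$ and $T_{j-1}t_{j-1}=t_jT_{j-1}-\Delta^{-2}\sum_{1\le c_1<c_2\le r}(u_{c_2}-u_{c_1})(q-q^{-1})F_{c_1}(t_{j-1})F_{c_2}(t_j)$. Write $[1,r]=\{1,\ldots,r\}$ and $b_{\mathbf k}:=\prod_{i=1}^n\prod_{1\le j\le r,\,j\ne k_i}\frac{t_i-u_j}{u_{k_i}-u_j}$ for $\mathbf k=(k_1,\ldots,k_n)\in[1,r]^n$. *)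

(* Defs.v *)
From HB Require Import structures.
From mathcomp Require Import all_boot all_order all_algebra.
Set Implicit Arguments. Unset Strict Implicit. Unset Printing Implicit Defensive.
Import GRing.Theory.
Local Open Scope ring_scope.

Definition Delta (R : comPzRingType) (r : nat) (u : 'I_r -> R) : R :=
  \prod_(i < r) \prod_(j < r | (j < i)%N) (u i - u j).

(* F_c : the unique polynomial of degree <= r-1 with F_c(u_c') = delta_{c,c'} Delta,
   written explicitly via Lagrange interpolation (well defined when Delta is a unit). *)
Definition Fpoly (R : idomainType) (r : nat) (u : 'I_r -> R) (c : 'I_r) : {poly R} :=
  (Delta u) *: \prod_(j < r | j != c) ((u c - u j)^-1 *: ('X - (u j)%:P)).

(* Defining relations of H_{n,r}(R,q,u_1..u_r) for elements t_1..t_n, T_1..T_{n-1}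
   (1-based indices, the values outside these ranges are irrelevant). *)
Definition HRels (R : idomainType) (n r : nat) (q : R) (u : 'I_r -> R)
    (A : algType R) (t T : nat -> A) : Prop :=
  let D := Delta u in
  let F c x := horner_alg x (Fpoly u c) in
  let S j := D ^- 2 *: \sum_(c1 < r) \sum_(c2 < r | (c1 < c2)%N)
       (((u c2 - u c1) * (q - q^-1)) *: (F c1 (t j.-1) * F c2 (t j))) in
  (forall i, (1 <= i <= n.-1)%N -> (T i - q%:A) * (T i + q^-1%:A) = 0) /\
      (forall i, (1 <= i <= n)%N -> \prod_(c < r) (t i - (u c)%:A) = 0) /\
      (forall i, (1 <= i)%N -> (i.+1 <= n.-1)%N ->
          T i * T i.+1 * T i = T i.+1 * T i * T i.+1) /\
      (forall i j, (1 <= i <= n.-1)%N -> (1 <= j <= n.-1)%N -> (i.+2 <= j)%N || (j.+2 <= i)%N ->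
          T i * T j = T j * T i) /\
      (forall i j, (1 <= i <= n)%N -> (1 <= j <= n)%N -> t i * t j = t j * t i) /\
      (forall j k, (1 <= j <= n.-1)%N -> (1 <= k <= n)%N -> k != j -> k != j.+1 ->
          T j * t k = t k * T j) /\
      (forall j, (2 <= j <= n)%N ->
          T j.-1 * t j = t j.-1 * T j.-1 + S j /\
          T j.-1 * t j.-1 = t j * T j.-1 - S j).

(* (A, t, T) is a presentation of H_{n,r}(R,q,u): the generators satisfy the
   relations, and (A,t,T) is initial: for every R-algebra B with elements
   satisfying the relations there is a unique R-algebra morphism A -> B
   sending generators to the given elements. *)
Definition is_Hnr (R : idomainType) (n r : nat) (q : R) (u : 'I_r -> R)
    (A : algType R) (t T : nat -> A) : Prop :=
  HRels n q u t T /\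
  forall (B : algType R) (tB TB : nat -> B), HRels n q u tB TB ->
    (exists f : {lrmorphism A -> B},
        (forall i, (1 <= i <= n)%N -> f (t i) = tB i) /\
        (forall j, (1 <= j <= n.-1)%N -> f (T j) = TB j)) /\
    (forall f g : {lrmorphism A -> B},
        (forall i, (1 <= i <= n)%N -> f (t i) = g (t i)) ->
        (forall j, (1 <= j <= n.-1)%N -> f (T j) = g (T j)) ->
        f =1 g).

Definition bk (R : idomainType) (n r : nat) (u : 'I_r -> R) (A : algType R)
    (t : nat -> A) (k : {ffun 'I_n -> 'I_r}) : A :=
  \prod_(i < n) \prod_(j < r | j != k i) ((u (k i) - u j)^-1 *: (t i.+1 - (u j)%:A)).

(* Main.v *)
Require Import Defs.
From HB Require Import structures.
From mathcomp Require Import all_boot all_order all_algebra.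
From mathcomp Require Import ring zify.
Import GRing.Theory.
Local Open Scope ring_scope.
Set Implicit Arguments. Unset Strict Implicit. Unset Printing Implicit Defensive.

Section Lag.
Variables (R : idomainType) (r : nat) (u : 'I_r -> R).
Hypothesis hu : forall i j : 'I_r, i != j -> u i - u j \is a GRing.unit.

Definition Lp (c : 'I_r) : {poly R} :=
  \prod_(j < r | j != c) ((u c - u j)^-1 *: ('X - (u j)%:P)).

Lemma Lp_eval c d : (Lp c).[u d] = (c == d)%:R.
Proof.
rewrite /Lp horner_prod; have [<-|ncd] := eqVneq c d.
  by apply: big1 => j hj; rewrite hornerZ hornerXsubC mulVr // hu // eq_sym.
rewrite (bigD1 d) /=; last by rewrite eq_sym.
by rewrite hornerZ hornerXsubC subrr mulr0 mul0r.
Qed.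

Lemma u_inj : injective u.
Proof.
move=> i j hij; apply/eqP; apply: contraT => nij.
by have := hu nij; rewrite hij subrr unitr0.
Qed.

Lemma size_Lp c : (size (Lp c) <= r)%N.
Proof.
rewrite /Lp size_prod; last first.
  move=> j hj; rewrite scale_poly_eq0 negb_or invr_eq0.
  rewrite -size_poly_eq0 size_XsubC andbT.
  by apply/eqP => h; rewrite eq_sym in hj; have := hu hj; rewrite h unitr0.
rewrite (eq_bigr (fun _ => 2%N)); last first.
  move=> j hj; rewrite size_scale ?size_XsubC // invr_eq0.
  by apply/eqP => h; rewrite eq_sym in hj; have := hu hj; rewrite h unitr0.
rewrite sum_nat_const.
set k := #|_|.
have -> : k = r.-1 by rewrite /k cardC1 card_ord.
have : (0 < r)%N by exact: (leq_ltn_trans (leq0n c) (ltn_ord c)).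
move=> ?. lia.
Qed.

Lemma sum_Lp : (0 < r)%N -> \sum_(c < r) Lp c = 1.
Proof.
move=> r0; apply/eqP; rewrite -subr_eq0; apply/eqP.
apply: (@roots_geq_poly_eq0 _ _ [seq u i | i <- enum 'I_r]).
- apply/allP => x /mapP [m _ ->]; rewrite /root hornerD horner_sum hornerN hornerC.
  rewrite (eq_bigr (fun c => (c == m)%:R)); last by move=> c _; rewrite Lp_eval.
  by rewrite (bigD1 m) //= eqxx big1 ?addr0 ?subrr // => c /negPf ->.
- by rewrite map_inj_uniq ?enum_uniq //; apply: u_inj.
- rewrite size_map size_enum_ord.
  apply: leq_trans (size_polyD _ _) _; rewrite geq_max size_polyN size_poly1 r0 andbT.
  apply: leq_trans (size_sum _ _ _) _.
  by apply/bigmax_leqP => c _; apply: size_Lp.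
Qed.
End Lag.

Definition ev (R : idomainType) (r : nat) (u : 'I_r -> R) (A : algType R) (x : A) c :=
  horner_alg x (Lp u c).

Lemma comm_horner (R : idomainType) (A : algType R) (a z : A) (h : {poly R}) :
  GRing.comm a z -> GRing.comm a (horner_alg z h).
Proof.
move=> caz; elim/poly_ind: h => [|h c IH]; first by rewrite rmorph0; apply: commr0.
rewrite rmorphD rmorphM /= horner_algX horner_algC.
by apply: commrD; [apply: commrM | apply/commr_sym/comm_alg].
Qed.

Lemma comm_horner2 (R : idomainType) (A : algType R) (x y : A) (g h : {poly R}) :
  GRing.comm x y -> GRing.comm (horner_alg x g) (horner_alg y h).
Proof.
move=> cxy; apply: comm_horner; apply/commr_sym/comm_horner/commr_sym; exact: cxy.
Qed.

Section Spec.
Variables (R : idomainType) (r : nat) (u : 'I_r -> R).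
Hypothesis hu : forall i j : 'I_r, i != j -> u i - u j \is a GRing.unit.
Variables (A : algType R) (x : A).
Hypothesis hx : \prod_(c < r) (x - (u c)%:A) = 0.

Local Notation e := (ev u x).

Lemma horner_alg_XsubC (a : R) : horner_alg x ('X - a%:P) = x - a%:A.
Proof. by rewrite rmorphB /= horner_algX horner_algC. Qed.

Lemma hPi : horner_alg x (\prod_(j < r) ('X - (u j)%:P)) = 0.
Proof.
rewrite rmorph_prod -hx; apply: eq_bigr => j _; exact: horner_alg_XsubC.
Qed.

Lemma XLp c : ('X - (u c)%:P) * Lp u c =
   (\prod_(j < r | j != c) (u c - u j)^-1) *: \prod_(j < r) ('X - (u j)%:P).
Proof.
rewrite /Lp scaler_prod -scalerAr; congr (_ *: _).
by rewrite [in RHS](bigD1 c).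
Qed.

Lemma xe c : x * e c = u c *: e c.
Proof.
apply/eqP; rewrite -subr_eq0 -mulr_algl -mulrBl; apply/eqP.
by rewrite /ev -horner_alg_XsubC -rmorphM /= XLp linearZ /= hPi mulr0.
Qed.

Lemma he h c : horner_alg x h * e c = h.[u c] *: e c.
Proof.
elim/poly_ind: h => [|h a IH]; first by rewrite rmorph0 mul0r horner0 scale0r.
rewrite rmorphD rmorphM /= horner_algX horner_algC mulrDl -mulrA xe -scalerAr IH.
by rewrite scalerA mulr_algl -scalerDl hornerMXaddC mulrC.
Qed.

Lemma comm_ex h c : GRing.comm (horner_alg x h) (e c).
Proof. by rewrite /GRing.comm /ev -!rmorphM /= mulrC. Qed.

Lemma eh h c : e c * horner_alg x h = h.[u c] *: e c.
Proof. by rewrite -comm_ex he. Qed.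

Lemma ee c d : e c * e d = (c == d)%:R *: e d.
Proof. by rewrite [e c]/ev he Lp_eval. Qed.

Lemma sume : \sum_(c < r) e c = 1.
Proof.
case: r u hu x hx => [|r'] u' hu' x' hx'.
  move: hx'; rewrite big_ord0 => /eqP; rewrite oner_eq0 //.
by rewrite /ev -rmorph_sum sum_Lp // rmorph1.
Qed.

Lemma mul_spec (f g : 'I_r -> R) :
  (\sum_(c < r) f c *: e c) * (\sum_(d < r) g d *: e d) = \sum_(c < r) (f c * g c) *: e c.
Proof.
rewrite mulr_suml; apply: eq_bigr => c _; rewrite mulr_sumr.
rewrite (bigD1 c) //= big1 ?addr0.
  by rewrite -scalerAl -scalerAr ee eqxx scale1r scalerA.
by move=> d /negPf nd; rewrite -scalerAl -scalerAr ee eq_sym nd scale0r !scaler0.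
Qed.

Lemma one_spec : 1 = \sum_(c < r) 1 *: e c.
Proof. by rewrite -sume; apply: eq_bigr => c _; rewrite scale1r. Qed.

Lemma alg_spec (a : R) : a%:A = \sum_(c < r) a *: e c.
Proof. by rewrite -sume scaler_sumr. Qed.

Lemma horner_spec (v : 'I_r -> R) h :
  horner_alg (\sum_(c < r) v c *: e c) h = \sum_(c < r) h.[v c] *: e c.
Proof.
elim/poly_ind: h => [|h a IH].
  by rewrite rmorph0 big1 // => c _; rewrite horner0 scale0r.
rewrite rmorphD rmorphM /= horner_algX horner_algC IH mul_spec alg_spec -big_split /=.
by apply: eq_bigr => c _; rewrite -scalerDl hornerMXaddC.
Qed.

Lemma x_spec : x = \sum_(c < r) u c *: e c.
Proof.
by rewrite -[LHS]mulr1 -sume mulr_sumr; apply: eq_bigr => c _; rewrite xe.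
Qed.

Lemma horner_x h : horner_alg x h = \sum_(c < r) h.[u c] *: e c.
Proof. by rewrite -horner_spec -x_spec. Qed.

Lemma prod_spec (I : Type) (s : seq I) (F : I -> 'I_r -> R) :
  \prod_(i <- s) (\sum_(c < r) F i c *: e c) = \sum_(c < r) (\prod_(i <- s) F i c) *: e c.
Proof.
elim: s => [|i s IH].
  by rewrite big_nil one_spec; apply: eq_bigr => c _; rewrite big_nil.
by rewrite big_cons IH mul_spec; apply: eq_bigr => c _; rewrite big_cons.
Qed.

Lemma e_prod c :
  e c = \prod_(j < r | j != c) ((u c - u j)^-1 *: (x - (u j)%:A)).
Proof.
rewrite /ev /Lp rmorph_prod; apply: eq_bigr => j _.
by rewrite [LHS]linearZ /= horner_alg_XsubC mulr_algl.
Qed.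

End Spec.

Lemma ex_x (R : idomainType) (r : nat) (u : 'I_r -> R)
  (A : algType R) (x : A) (hx : \prod_(c < r) (x - (u c)%:A) = 0) c :
  ev u x c * x = u c *: ev u x c.
Proof. by have := eh hx 'X c; rewrite horner_algX hornerX. Qed.

Section Key.
Variables (R : idomainType) (r : nat) (u : 'I_r -> R).
Hypothesis hu : forall i j : 'I_r, i != j -> u i - u j \is a GRing.unit.
Variables (A : algType R) (x y T : A) (k : R).
Hypothesis hx : \prod_(c < r) (x - (u c)%:A) = 0.
Hypothesis hy : \prod_(c < r) (y - (u c)%:A) = 0.
Hypothesis cxy : GRing.comm x y.

Definition Sg (g : {poly R}) := \sum_(c1 < r) \sum_(c2 < r | (c1 < c2)%N)
   (((g.[u c2] - g.[u c1]) * k) *: (ev u x c1 * ev u y c2)).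

Lemma Sstep1 h c : horner_alg x h * Sg 'X + Sg h * y = Sg (h * 'X + c%:P).
Proof.
rewrite /Sg mulr_sumr mulr_suml -big_split; apply: eq_bigr => c1 _.
rewrite mulr_sumr mulr_suml -big_split; apply: eq_bigr => c2 _ /=.
rewrite -scalerAr mulrA (he hx) -scalerAl scalerA.
rewrite -scalerAl -[ev u x c1 * _ * y]mulrA (ex_x hy) -scalerAr scalerA -scalerDl.
congr (_ *: _); rewrite !hornerMXaddC !hornerX; ring.
Qed.

Lemma Sstep2 h c : horner_alg y h * Sg 'X + Sg h * x = Sg (h * 'X + c%:P).
Proof.
rewrite /Sg mulr_sumr mulr_suml -big_split; apply: eq_bigr => c1 _.
rewrite mulr_sumr mulr_suml -big_split; apply: eq_bigr => c2 _ /=.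
have cyx : GRing.comm y x by apply/commr_sym.
rewrite -scalerAr mulrA [horner_alg y h * _](comm_horner2 _ _ cyx) -mulrA.
rewrite (he hy) -scalerAr scalerA.
rewrite -/(ev u x c1) -scalerAl -[ev u x c1 * _ * x]mulrA.
have -> : ev u y c2 * x = x * ev u y c2.
  by have := comm_horner2 (Lp u c2) 'X cyx; rewrite horner_algX.
rewrite mulrA (ex_x hx) -scalerAl scalerA -scalerDl.
congr (_ *: _); rewrite !hornerMXaddC !hornerX; ring.
Qed.

Lemma key (h1 : T * y = x * T + Sg 'X) (h2 : T * x = y * T - Sg 'X) g :
  T * horner_alg y g = horner_alg x g * T + Sg g /\
  T * horner_alg x g = horner_alg y g * T - Sg g.
Proof.
have S0 : Sg 0 = 0.
  by rewrite /Sg big1 // => c1 _; rewrite big1 // => c2 _; rewrite !horner0 subrr mul0r scale0r.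
elim/poly_ind: g => [|h c [IH1 IH2]].
  by rewrite !rmorph0 S0 mulr0 mul0r addr0 subr0.
rewrite !rmorphD !rmorphM /= !horner_algX !horner_algC.
rewrite !mulrDr !mulrDl !mulr_algr !mulr_algl; split.
  have E : T * (horner_alg y h * y) =
      horner_alg x h * x * T + (horner_alg x h * Sg 'X + Sg h * y).
    rewrite mulrA IH1 mulrDl -(mulrA (horner_alg x h) T y) h1 mulrDr mulrA.
    by rewrite addrA.
  by rewrite E (Sstep1 h c) -addrA [_ + c *: T]addrC addrA.
have E : T * (horner_alg x h * x) =
    horner_alg y h * y * T - (horner_alg y h * Sg 'X + Sg h * x).
  rewrite mulrA IH2 mulrBl -(mulrA (horner_alg y h) T x) h2 mulrBr mulrA.
  by rewrite opprD addrA.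
by rewrite E (Sstep2 h c) -addrA [_ + c *: T]addrC addrA.
Qed.

End Key.

Lemma unit_diff (R : idomainType) (r : nat) (u : 'I_r -> R) :
  Delta u \is a GRing.unit -> forall i j : 'I_r, i != j -> u i - u j \is a GRing.unit.
Proof.
move=> /unitr_prodP hD.
have H : forall i j : 'I_r, (j < i)%N -> u i - u j \is a GRing.unit.
  move=> i j ji; have /unitr_prodP := hD i (mem_index_enum _) isT.
  by apply; rewrite ?mem_index_enum.
move=> i j nij; have [ji|ij] := ltnP j i; first exact: H.
rewrite -opprB unitrN; apply: H; rewrite ltn_neqAle ij andbT.
by apply: contra nij => /eqP e; apply/eqP/val_inj.
Qed.

Definition Pa (R : idomainType) (r : nat) (a : 'I_r -> R) : {poly R} :=
  \sum_(j < r) a j *: 'X^j.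

Lemma horner_alg_Pa (R : idomainType) (r : nat) (a : 'I_r -> R) (A : algType R) (z : A) :
  horner_alg z (Pa a) = \sum_(j < r) a j *: z ^+ j.
Proof.
rewrite /Pa rmorph_sum; apply: eq_bigr => j _.
by rewrite [LHS]linearZ /= rmorphXn /= horner_algX mulr_algl.
Qed.

Lemma horner_Pa (R : idomainType) (r : nat) (a : 'I_r -> R) (z : R) :
  (Pa a).[z] = \sum_(j < r) a j * z ^+ j.
Proof.
by rewrite /Pa horner_sum; apply: eq_bigr => j _; rewrite hornerZ hornerXn.
Qed.

Lemma tP_spec (R : idomainType) (r : nat) (u ut a : 'I_r -> R)
  (ha : forall m, \sum_(j < r) a j * u m ^+ j = ut m)
  (hu : forall i j : 'I_r, i != j -> u i - u j \is a GRing.unit)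
  (A : algType R) (z : A) (hz : \prod_(c < r) (z - (u c)%:A) = 0) :
  \sum_(j < r) a j *: z ^+ j = \sum_(c < r) ut c *: ev u z c.
Proof.
rewrite -horner_alg_Pa (horner_x hu hz); apply: eq_bigr => c _.
by rewrite horner_Pa ha.
Qed.

Lemma S_conv (R : idomainType) (r : nat) (A : algType R) (D : R) (hD : D \is a GRing.unit)
  (FX FY X Y : 'I_r -> A) (w : 'I_r -> 'I_r -> R)
  (hX : forall c, FX c = D *: X c) (hY : forall c, FY c = D *: Y c) :
  D ^- 2 *: \sum_(c1 < r) \sum_(c2 < r | (c1 < c2)%N) (w c1 c2 *: (FX c1 * FY c2)) =
  \sum_(c1 < r) \sum_(c2 < r | (c1 < c2)%N) (w c1 c2 *: (X c1 * Y c2)).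
Proof.
rewrite scaler_sumr; apply: eq_bigr => c1 _; rewrite scaler_sumr; apply: eq_bigr => c2 _.
rewrite hX hY -scalerAl -scalerAr !scalerA; congr (_ *: _).
rewrite -!mulrA mulrCA -expr2 mulVr ?mulr1 //.
by rewrite unitrX.
Qed.

Lemma transfer (R : idomainType) (r : nat) (A : algType R) (n : nat) (q : R)
  (u ut a : 'I_r -> R) (t T : nat -> A) :
  Delta u \is a GRing.unit -> Delta ut \is a GRing.unit ->
  (forall m, \sum_(j < r) a j * u m ^+ j = ut m) -> HRels n q u t T ->
  HRels n q ut (fun i => \sum_(j < r) a j *: t i ^+ j) T.
Proof.
move=> hD hDt ha; have hu := unit_diff hD; have hut := unit_diff hDt.
rewrite /HRels; cbv beta zeta.
move=> [h1 [h2 [h3 [h4 [h5 [h6 h7]]]]]].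
split; first exact: h1.
split.
  move=> i hi; rewrite (tP_spec ha hu (h2 i hi)).
  have hz := h2 i hi.
  rewrite (eq_bigr (fun c => \sum_(d < r) (ut d - ut c) *: ev u (t i) d)); last first.
    by move=> c _; rewrite (alg_spec hu hz) -sumrB; apply: eq_bigr => d _; rewrite scalerBl.
  rewrite (prod_spec hu hz) big1 // => d _.
  by rewrite (bigD1 d) //= subrr mul0r scale0r.
split; first exact: h3.
split; first exact: h4.
have hP : forall i, \sum_(j < r) a j *: t i ^+ j = horner_alg (t i) (Pa a).
  by move=> i; rewrite horner_alg_Pa.
split.
  move=> i j hi hj; rewrite !hP; apply: comm_horner2; exact: h5.
split.
  move=> j k hj hk k1 k2; rewrite hP; apply: comm_horner; exact: h6.
move=> j hj.
have hj1 : (0 < j.-1 <= n)%N by move: hj; lia.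
have hj2 : (0 < j <= n)%N by move: hj; lia.
have hx := h2 _ hj1; have hy := h2 _ hj2.
have cxy : GRing.comm (t j.-1) (t j) by exact: h5.
have [e1 e2] := h7 j hj.
set k := q - q^-1.
have hS : Delta u ^- 2 *:
    \sum_(c1 < r) \sum_(c2 < r | (c1 < c2)%N) ((u c2 - u c1) * k) *:
          (horner_alg (t j.-1) (Fpoly u c1) * horner_alg (t j) (Fpoly u c2))
    = Sg u (t j.-1) (t j) k 'X.
  rewrite (S_conv hD (X := ev u (t j.-1)) (Y := ev u (t j))); last first.
  - by move=> c; rewrite /Fpoly [LHS]linearZ /= mulr_algl.
  - by move=> c; rewrite /Fpoly [LHS]linearZ /= mulr_algl.
  by apply: eq_bigr => c1 _; apply: eq_bigr => c2 _; rewrite !hornerX.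
rewrite hS in e1 e2.
have [k1 k2] := key hx hy cxy e1 e2 (Pa a).
have ev_t : forall (z : A) (c : 'I_r), \prod_(d < r) (z - (u d)%:A) = 0 ->
    horner_alg (\sum_(j < r) a j *: z ^+ j) (Fpoly ut c) = Delta ut *: ev u z c.
  move=> z c hz; rewrite /Fpoly [LHS]linearZ /= mulr_algl; congr (_ *: _).
  rewrite (tP_spec ha hu hz) (horner_spec hu hz) -/(Lp ut c).
  rewrite (bigD1 c) //= big1 ?addr0.
    by rewrite (Lp_eval hut) eqxx scale1r.
  by move=> d nd; rewrite (Lp_eval hut) eq_sym (negPf nd) scale0r.
have hSt : Delta ut ^- 2 *:
    \sum_(c1 < r) \sum_(c2 < r | (c1 < c2)%N) ((ut c2 - ut c1) * k) *:
          (horner_alg (\sum_(j0 < r) a j0 *: t j.-1 ^+ j0) (Fpoly ut c1) *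
           horner_alg (\sum_(j0 < r) a j0 *: t j ^+ j0) (Fpoly ut c2))
    = Sg u (t j.-1) (t j) k (Pa a).
  rewrite (S_conv hDt (X := ev u (t j.-1)) (Y := ev u (t j))); last first.
  - by move=> c; apply: ev_t.
  - by move=> c; apply: ev_t.
  by apply: eq_bigr => c1 _; apply: eq_bigr => c2 _; rewrite !horner_Pa !ha.
rewrite hSt !hP; split; [exact: k1 | exact: k2].
Qed.

Lemma HRels_spec (R : idomainType) (r : nat) (A : algType R) (n : nat) (q : R)
  (u : 'I_r -> R) (t T : nat -> A) :
  HRels n q u t T -> forall i, (1 <= i <= n)%N -> \prod_(c < r) (t i - (u c)%:A) = 0.
Proof. by move=> H; exact: (proj1 (proj2 H)). Qed.

Lemma bk_sum (R : idomainType) (r n : nat) (A : algType R) (u ut a : 'I_r -> R)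
  (t : nat -> A)
  (hu : forall i j : 'I_r, i != j -> u i - u j \is a GRing.unit)
  (ha : forall m, \sum_(j < r) a j * u m ^+ j = ut m)
  (ht : forall i : 'I_n, \prod_(c < r) (t i.+1 - (u c)%:A) = 0) (i : 'I_n) :
  \sum_(k : {ffun 'I_n -> 'I_r}) ut (k i) *: bk u t k = \sum_(j < r) a j *: t i.+1 ^+ j.
Proof.
rewrite (tP_spec ha hu (ht i)).
pose G (i' : 'I_n) (c : 'I_r) := (if i' == i then ut c else 1) *: ev u (t i'.+1) c.
rewrite (eq_bigr (fun k : {ffun 'I_n -> 'I_r} => \prod_(i' < n) G i' (k i'))); last first.
  move=> k _; rewrite /G scaler_prod -big_mkcond /= big_pred1_eq; congr (_ *: _).
  by rewrite /bk; apply: eq_bigr => i' _; rewrite e_prod.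
rewrite -bigA_distr_bigA /=.
rewrite (eq_bigr (fun i' => if i' == i then \sum_(c < r) ut c *: ev u (t i.+1) c else 1)).
  by rewrite -big_mkcond /= big_pred1_eq.
move=> i' _; rewrite /G; case: eqP => [->|_]; first by [].
by rewrite (one_spec hu (ht i')).
Qed.

Lemma map_tP (R : idomainType) (r : nat) (A B : algType R) (f : {lrmorphism A -> B})
  (a : 'I_r -> R) (z : A) :
  f (\sum_(j < r) a j *: z ^+ j) = \sum_(j < r) a j *: f z ^+ j.
Proof.
rewrite rmorph_sum; apply: eq_bigr => j _.
by rewrite -[a j *: _]mulr_algl rmorphM /= rmorph_alg mulr_algl rmorphXn.
Qed.

Lemma tP_inv (R : idomainType) (r : nat) (u ut a a' : 'I_r -> R)
  (ha : forall m, \sum_(j < r) a j * u m ^+ j = ut m)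
  (ha' : forall m, \sum_(j < r) a' j * ut m ^+ j = u m)
  (hut : forall i j : 'I_r, i != j -> ut i - ut j \is a GRing.unit)
  (A : algType R) (z : A) (hz : \prod_(c < r) (z - (ut c)%:A) = 0) :
  \sum_(j < r) a j *: (\sum_(j' < r) a' j' *: z ^+ j') ^+ j = z.
Proof.
rewrite (tP_spec ha' hut hz) -horner_alg_Pa (horner_spec hut hz) [RHS](x_spec hut hz).
by apply: eq_bigr => c _; rewrite horner_Pa ha.
Qed.

Unset Implicit Arguments.

Theorem corollary3p14 (R : idomainType) (n r : nat) (q : R) (u ut : 'I_r -> R)
  (hq : q \is a GRing.unit)
  (hD : Delta u \is a GRing.unit) (hDt : Delta ut \is a GRing.unit)
  (Ht : algType R) (tt TT : nat -> Ht) (hHt : is_Hnr n q ut tt TT)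
  (H : algType R) (t T : nat -> H) (hH : is_Hnr n q u t T)
  (a : 'I_r -> R) (ha : forall m : 'I_r, \sum_(j < r) a j * u m ^+ j = ut m) :
  exists f : {lrmorphism Ht -> H},
    bijective f /\
    (forall j, (1 <= j <= n.-1)%N -> f (TT j) = T j) /\
    (forall i : 'I_n,
        f (tt i.+1) = \sum_(k : {ffun 'I_n -> 'I_r}) ut (k i) *: bk u t k /\
        \sum_(k : {ffun 'I_n -> 'I_r}) ut (k i) *: bk u t k
          = \sum_(j < r) a j *: t i.+1 ^+ j).
Proof.
have hu := unit_diff hD; have hut := unit_diff hDt.
pose P' := \sum_(c < r) u c *: Lp ut c.
pose a' := fun j : 'I_r => P'`_j.
have ha' : forall m, \sum_(j < r) a' j * ut m ^+ j = u m.
  move=> m; rewrite -horner_coef_wide.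
    rewrite /P' horner_sum (bigD1 m) //= big1 ?addr0.
      by rewrite hornerZ (Lp_eval hut) eqxx mulr1.
    by move=> c nc; rewrite hornerZ (Lp_eval hut) (negPf nc) mulr0.
  apply: leq_trans (size_sum _ _ _) _; apply/bigmax_leqP => c _.
  exact: leq_trans (size_scale_leq _ _) (size_Lp hut c).
case: hHt => relt univt; case: hH => rel univ.
have rel' := transfer hD hDt ha rel.
have relt' := transfer hDt hD ha' relt.
have [[f [ft fT]] _] := univt H _ _ rel'.
have [[g [gt gT]] _] := univ Ht _ _ relt'.
have [_ uniqt] := univt Ht tt TT relt.
have [_ uniq] := univ H t T rel.
have sp := HRels_spec rel; have spt := HRels_spec relt.
exists f; split; last split.
- exists g.
  + apply: (uniqt (g \o f) idfun) => [i hi|j hj] /=.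
      by rewrite ft // map_tP gt // (tP_inv ha ha' hut (spt i hi)).
    by rewrite fT // gT.
  + apply: (uniq (f \o g) idfun) => [i hi|j hj] /=.
      by rewrite gt // map_tP ft // (tP_inv ha' ha hu (sp i hi)).
    by rewrite gT // fT.
- exact: fT.
move=> i.
have ht : forall i' : 'I_n, \prod_(c < r) (t i'.+1 - (u c)%:A) = 0.
  by move=> i'; apply: sp; rewrite /= ltn_ord.
have E := bk_sum hu ha ht i.
split; last exact: E.
by rewrite E ft //= ltn_ord.
Qed.
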